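(* The relation $\le$ on $\mathcal{F}_{\mathrm{ord}}(n)$ is a partial order, and its covering relation is exactly $\lessdot$ (that is, $F'$ is covered by $F$ if and only if $F'$ is obtained from $F$ by operating on one non-leaf vertex of $F$).
   Context: An ordered forest is a finite forest of rooted trees in which the children of each vertex are linearly ordered (left to right) and the trees are linearly ordered (left to right); $\mathcal{F}_{\mathrm{ord}}(n)$ is the set of ordered forests on $n$ vertices up to isomorphism preserving roots, edge orientations and all orderings. Vertices are labeled $1,\dots,n$ by (left-to-right) preorder traversal: trees are traversed left to right, and within a tree each vertex is labeled before its subtrees, which are traversed left to right. Operation on a vertex $v$ of $F$: if $v$ is a leaf, $F$ is unchanged; otherwise let $v'$ be the rightmost child of $v$; delete the edge $v\to v'$, and if $v$ has a parent $w$, attach $v'$ (with its subtree) as a child of $w$ placed immediately to the right of $v$, while if $v$ is a root, the subtree of $v'$ becomes a new tree placed immediately to the right of the tree containing $v$. Define $F'\lessdot F$ if $F'$ is obtained from $F$ by operating on one non-leaf vertex, and $F'\le F$ if there is a sequence $F'=F_1,\dots,F_k=F$ ($k\ge1$) in $\mathcal{F}_{\mathrm{ord}}(n)$ with $F_i\lessdot F_{i+1}$ for all $i$. *)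

(* Defs.v *)
From Stdlib Require Import Relation_Operators.
From mathcomp Require Import all_boot.
Set Implicit Arguments. Unset Strict Implicit. Unset Printing Implicit Defensive.

(* An ordered tree is a root together with a (left-to-right) ordered forest of
   subtrees; an ordered forest is a (left-to-right) list of ordered trees.
   Structural equality of these terms is exactly isomorphism preserving roots,
   edge orientations and all orderings. *)
Inductive otree : Type := Node of oforest
with oforest : Type := FNil | FCons of otree & oforest.

Fixpoint fsize (f : oforest) : nat :=
  match f with
  | FNil => 0
  | FCons (Node ch) rest => (fsize ch).+1 + fsize rest
  end.

Fixpoint flength (f : oforest) : nat :=
  match f with FNil => 0 | FCons _ rest => (flength rest).+1 end.

Fixpoint split_last (f : oforest) : option (oforest * otree) :=
  match f with
  | FNil => None
  | FCons t rest =>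
      match split_last rest with
      | None => Some (FNil, t)
      | Some (r', l) => Some (FCons t r', l)
      end
  end.

(* Number of children of the vertex with 0-based preorder index k in the
   forest f (0 if k is out of range). *)
Fixpoint nchildren (k : nat) (f : oforest) : nat :=
  match f with
  | FNil => 0
  | FCons (Node ch) rest =>
      if k == 0 then flength ch
      else if k.-1 < fsize ch then nchildren k.-1 ch
      else nchildren (k - (fsize ch).+1) rest
  end.

(* Operation on the vertex v with 0-based preorder index k of the sibling list
   f: if v is a leaf nothing changes; otherwise its rightmost child v' (with
   its subtree) is detached and inserted into the same sibling list as v (the
   children of v's parent w, or the list of trees if v is a root),
   immediately to the right of v. *)
Fixpoint op_list (k : nat) (f : oforest) : oforest :=
  match f with
  | FNil => FNil
  | FCons (Node ch) rest =>
      if k == 0 then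
        match split_last ch with
        | None => f
        | Some (ch', c) => FCons (Node ch') (FCons c rest)
        end
      else if k.-1 < fsize ch then FCons (Node (op_list k.-1 ch)) rest
      else FCons (Node ch) (op_list (k - (fsize ch).+1) rest)
  end.

(* Vertices are labelled 1..n by (left-to-right) preorder. *)
Definition is_leaf (F : oforest) (v : nat) : bool := nchildren v.-1 F == 0.
Definition op_vertex (F : oforest) (v : nat) : oforest := op_list v.-1 F.

Definition lessdot (n : nat) (F' F : oforest) : Prop :=
  fsize F = n /\ fsize F' = n /\
  exists v, [/\ 1 <= v <= n, ~~ is_leaf F v & F' = op_vertex F v].

Definition ord_le (n : nat) (F' F : oforest) : Prop :=
  fsize F' = n /\ fsize F = n /\ clos_refl_trans oforest (lessdot n) F' F.

Definition ord_covers (n : nat) (F' F : oforest) : Prop :=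
  [/\ ord_le n F' F, F' <> F &
      forall G, ord_le n F' G -> ord_le n G F -> G = F' \/ G = F].

(* Main.v *)
Require Import Defs.
From Stdlib Require Import Relation_Operators Operators_Properties.
From mathcomp Require Import all_boot zify.
Set Implicit Arguments. Unset Strict Implicit. Unset Printing Implicit Defensive.

Fixpoint svec (f : oforest) : seq nat :=
  match f with
  | FNil => [::]
  | FCons (Node ch) rest => (fsize ch).+1 :: svec ch ++ svec rest
  end.

Definition oforest_ind' (P : oforest -> Prop) (H0 : P FNil)
  (HS : forall ch rest, P ch -> P rest -> P (FCons (Node ch) rest)) :
  forall f, P f :=
  fix IH f := match f with
  | FNil => H0
  | FCons (Node ch) rest => HS ch rest (IH ch) (IH rest)
  end.

Lemma size_svec f : size (svec f) = fsize f.
Proof.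
elim/oforest_ind': f => //= ch rest IH1 IH2.
by rewrite size_cat IH1 IH2.
Qed.

Lemma split_last_None f : split_last f = None -> f = FNil.
Proof. case: f => //= t r; by case: (split_last r) => [[]|]. Qed.

Lemma split_last_svec f f' c : split_last f = Some (f', c) ->
  svec f = svec f' ++ svec (FCons c FNil).
Proof.
elim: f f' c => //= t r IH f' c.
case E: (split_last r) => [[r' l]|] [<- <-].
- by case: t => ch /=; rewrite (IH _ _ E) catA.
- by rewrite (split_last_None E).
Qed.

Lemma op_svec f k : 0 < nchildren k f -> exists l1 l2 l3 m,
  [/\ size l1 = k, 0 < m, svec f = l1 ++ (size l2 + 1 + m) :: l2 ++ m :: l3 &
      svec (op_list k f) = l1 ++ (size l2).+1 :: l2 ++ m :: l3].
Proof.
elim/oforest_ind': f k => [|ch rest IHc IHr] k //=.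
case: k => [|k] /=.
- case E: (split_last ch) => [[ch' [cc]]|]; last first.
    by rewrite (split_last_None E).
  move=> _. exists [::], (svec ch'), (svec cc ++ svec rest), (fsize cc).+1.
  split => //=.
  have Hs := split_last_svec E. rewrite Hs /= cats0 -catA /=.
  have : size (svec ch) = size (svec ch') + (fsize cc).+1.
    by rewrite Hs size_cat /= cats0 !size_svec.
  rewrite size_svec => ->. congr (_ :: _). lia.
  by rewrite size_svec.
- case: ifP => hk H.
  + have [l1 [l2 [l3 [m [h1 h2 h3 h4]]]]] := IHc k H.
    have hs : fsize (op_list k ch) = fsize ch.
      by rewrite -!size_svec h3 h4 !size_cat /= !size_cat.
    exists ((fsize ch).+1 :: l1), l2, (l3 ++ svec rest), m.
    split => //=; first by rewrite h1.
    + by rewrite h3 -!catA /= -!catA.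
    + by rewrite hs h4 -!catA /= -!catA.
  + have [l1 [l2 [l3 [m [h1 h2 h3 h4]]]]] := IHr _ H.
    exists ((fsize ch).+1 :: svec ch ++ l1), l2, l3, m.
    split => //=.
    + rewrite size_cat size_svec h1. move/negbT: hk; lia.
    + by rewrite h3 -!catA.
    + by rewrite h4 -!catA.
Qed.

Lemma svec_inj f g : svec f = svec g -> f = g.
Proof.
elim/oforest_ind': f g => [|ch rest IHc IHr] [|[ch'] rest'] //= [Hs Hl].
move/eqP: Hl; rewrite eqseq_cat ?size_svec ?Hs //.
by case/andP => /eqP /IHc -> /eqP /IHr ->.
Qed.

Lemma svec_bound f i : i < fsize f -> i + nth 0 (svec f) i <= fsize f.
Proof.
elim/oforest_ind': f i => [|ch rest IHc IHr] i //=.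
case: i => [|i] /=; first lia.
rewrite nth_cat size_svec. case: ifP => h1 h2.
- have := IHc _ h1; lia.
- have : i - fsize ch < fsize rest by move/negbT: h1; lia.
  move/IHr. move/negbT: h1; lia.
Qed.

Lemma svec_lam f i j : i < j < i + nth 0 (svec f) i ->
  j + nth 0 (svec f) j <= i + nth 0 (svec f) i.
Proof.
elim/oforest_ind': f i j => [|ch rest IHc IHr] i j /=.
  by rewrite !nth_nil; lia.
case: i => [|i]; case: j => [|j] //=.
- move=> h. rewrite nth_cat size_svec.
  have hj : j < fsize ch by lia.
  rewrite hj. have := svec_bound hj. lia.
- rewrite !nth_cat !size_svec. case: ifP => hi.
  + move=> h. have hb := svec_bound hi.
    have hj : j < fsize ch by lia.
    rewrite hj. have := IHc i j. lia.
  + move=> h. have hj : (j < fsize ch) = false by move/negbT: hi; lia.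
    rewrite hj. have := IHr (i - fsize ch) (j - fsize ch).
    move/negbT: hi. lia.
Qed.

Definition vle (s t : seq nat) := forall i, nth 0 s i <= nth 0 t i.

Lemma nth_other (l1 r : seq nat) x y i : i != size l1 ->
  nth 0 (l1 ++ x :: r) i = nth 0 (l1 ++ y :: r) i.
Proof.
rewrite !nth_cat; case: ifP => // h1 h2.
case E: (i - size l1) => [|j] //=. move/negbT: h1; lia.
Qed.

Arguments nth_other l1 r x y i _ : clear implicits.

Lemma nth_at (l1 r : seq nat) x : nth 0 (l1 ++ x :: r) (size l1) = x.
Proof. by rewrite nth_cat ltnn subnn. Qed.

Lemma eq_vec (s t : seq nat) : size s = size t ->
  (forall i, nth 0 s i = nth 0 t i) -> s = t.
Proof. move=> hs h; apply: (eq_from_nth (x0:=0)) => // i _; exact: h. Qed.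

Lemma squeeze l1 x y r t : vle (l1 ++ x :: r) t -> vle t (l1 ++ y :: r) ->
  size t = size (l1 ++ x :: r) -> exists z, t = l1 ++ z :: r /\ x <= z <= y.
Proof.
move=> h1 h2 hs. exists (nth 0 t (size l1)). split.
- apply: eq_vec; first by rewrite hs !size_cat.
  move=> i. case: (eqVneq i (size l1)) => [->|hi]; first by rewrite nth_at.
  have := h1 i; have := h2 i. rewrite (nth_other _ _ _ y _ hi) (nth_other _ _ _ (nth 0 t (size l1)) _ hi) (nth_other _ _ _ x _ hi). lia.
- have := h1 (size l1); have := h2 (size l1). rewrite !nth_at. lia.
Qed.

Lemma vle_one (l1 r : seq nat) x y : x <= y -> vle (l1 ++ x :: r) (l1 ++ y :: r).
Proof.
move=> h i. case: (eqVneq i (size l1)) => [->|hi]; first by rewrite !nth_at.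
by rewrite (nth_other _ _ _ y _ hi).
Qed.

Lemma lessdot_vec n F' F : lessdot n F' F -> exists l1 l2 l3 m,
  [/\ 0 < m, svec F = l1 ++ (size l2 + 1 + m) :: l2 ++ m :: l3 &
      svec F' = l1 ++ (size l2).+1 :: l2 ++ m :: l3].
Proof.
case=> _ [_ [v [_ hl ->]]].
have : 0 < nchildren v.-1 F by rewrite lt0n.
case/op_svec => l1 [l2 [l3 [m [_ h2 h3 h4]]]].
by exists l1, l2, l3, m.
Qed.

Lemma lessdot_vle n F' F : lessdot n F' F -> vle (svec F') (svec F) /\ svec F' <> svec F.
Proof.
case/lessdot_vec => l1 [l2 [l3 [m [hm -> ->]]]]. split.
- apply: vle_one; lia.
- move/(congr1 (fun s => nth 0 s (size l1))). rewrite !nth_at. lia.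
Qed.

Lemma le_vle n F' F : ord_le n F' F -> vle (svec F') (svec F).
Proof.
case=> _ [_ H]. elim: H => [x y /lessdot_vle [] //| x i // | x y z _ h1 _ h2 i].
exact: leq_trans (h1 i) (h2 i).
Qed.

Theorem theorem4p6 (n : nat) :
  [/\ (forall F : oforest, fsize F = n -> ord_le n F F),
      (forall F G : oforest, ord_le n F G -> ord_le n G F -> F = G),
      (forall F G H : oforest, ord_le n F G -> ord_le n G H -> ord_le n F H) &
      (forall F' F : oforest, fsize F' = n -> fsize F = n ->
         (ord_covers n F' F <-> lessdot n F' F))].
Proof.
have antis : forall F G : oforest, ord_le n F G -> ord_le n G F -> F = G.
  move=> F G h1 h2. apply: svec_inj. apply: eq_vec.
    by case: h1 => [a [b _]]; rewrite !size_svec a b.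
  move=> i. have := le_vle h1 i; have := le_vle h2 i. lia.
split => //.
- by move=> F h; split => //; split => //; apply: rt_refl.
- move=> F G H [a [b h1]] [c [d h2]]; split => //; split => //.
  exact: rt_trans h1 h2.
- move=> F' F s1 s2; split.
  + case=> [[_ [_ H]] hne hb].
    apply clos_rt_rt1n in H.
    inversion H as [E|G1 y hl hr E1]; first by subst.
    subst y.
    have hlG : ord_le n F' G1.
      split => //; split; first by case: hl.
      exact: rt_step.
    have hGF : ord_le n G1 F.
      split; first by case: hl.
      split; first by [].
      by apply: clos_rt1n_rt.
    case: (hb G1 hlG hGF) => [E|E].
    * by subst G1; case: (lessdot_vle hl).
    * by subst G1.
  + move=> hl. have ho : ord_le n F' F by split => //; split => //; apply: rt_step.
    split => //.
    * move=> E; subst F'. by case: (lessdot_vle hl).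
    * move=> G h1 h2.
      case/lessdot_vec: (hl) => l1 [l2 [l3 [m [hm hF hF']]]].
      have v1 := le_vle h1. have v2 := le_vle h2.
      rewrite hF' in v1. rewrite hF in v2.
      have hs : size (svec G) = size (l1 ++ (size l2).+1 :: l2 ++ m :: l3).
        by rewrite -hF' !size_svec s1; case: h1 => _ [].
      case: (squeeze v1 v2 hs) => z [hG hz].
      have lam := @svec_lam G (size l1) (size l1 + size l2 + 1).
      have e1 : nth 0 (svec G) (size l1) = z by rewrite hG nth_at.
      have e2 : nth 0 (svec G) (size l1 + size l2 + 1) = m.
        rewrite hG nth_cat; case: ifP => [h|_]; first lia.
        rewrite (_ : size l1 + size l2 + 1 - size l1 = (size l2).+1) /=; last lia.
        by rewrite nth_at.
      rewrite e1 e2 in lam.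
      case: (ltnP (size l1 + size l2 + 1) (size l1 + z)) => hc.
      * right. apply: svec_inj. rewrite hF hG.
        have -> : z = size l2 + 1 + m by have := lam; lia.
        by [].
      * left. apply: svec_inj. rewrite hF' hG.
        have -> : z = (size l2).+1 by lia.
        by [].
Qed.
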